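(* Let $(N,\langle\cdot,\cdot\rangle)$ be a 2-step nilpotent Lie group with a left-invariant Riemannian metric whose Lie algebra $\mathfrak n$ is either non-singular or almost non-singular. Then every left-invariant skew-symmetric $(1,1)$-tensor $F$ on $N$ of type II whose associated 2-form $\omega=\langle F\cdot,\cdot\rangle$ is closed and which is parallel ($\nabla F=0$, $\nabla$ the Levi-Civita connection) is identically zero.
   Context: A real Lie algebra is 2-step nilpotent if $[[U,V],W]=0$ for all $U,V,W$. Let $\mathfrak z$ be the center, $\mathfrak v=\mathfrak z^\perp$, and for $Z\in\mathfrak z$ define $j_Z:\mathfrak v\to\mathfrak v$ by $\langle j_ZV,W\rangle=\langle Z,[V,W]\rangle$. $\mathfrak n$ is non-singular if $j_Z$ is invertible for every nonzero $Z\in\mathfrak z$; it is almost non-singular if there exist $Z,\tilde Z\in\mathfrak z$ with $j_Z$ invertible and $j_{\tilde Z}$ singular. $F$ (identified with a skew-symmetric endomorphism of $\mathfrak n$) is of type II if $F(\mathfrak v)\subseteq\mathfrak z$ and $F(\mathfrak z)\subseteq\mathfrak v$. Closedness of a left-invariant 2-form means $\omega([U,V],W)+\omega([V,W],U)+\omega([W,U],V)=0$ for all $U,V,W\in\mathfrak n$. *)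

(* Defs.v *)
From mathcomp Require Import all_boot all_algebra.
From mathcomp Require Export reals.
Set Implicit Arguments. Unset Strict Implicit. Unset Printing Implicit Defensive.
Import GRing.Theory Num.Theory.
Local Open Scope ring_scope.

(* A metric Lie algebra (n, <.,.>) of dimension d is modelled, up to isometry,
   as 'rV[R]_d with the standard inner product and a Lie bracket br. *)

Definition ip {R : realType} {d : nat} (u v : 'rV[R]_d) : R := (u *m v^T) 0 0.

Definition is_lie_bracket {R : realType} {d : nat}
  (br : 'rV[R]_d -> 'rV[R]_d -> 'rV[R]_d) : Prop :=
  (forall (a : R) u v w, br (a *: u + v) w = a *: br u w + br v w) /\
  (forall u v, br u v = - br v u) /\
  (forall u v w, br u (br v w) + br v (br w u) + br w (br u v) = 0).

Definition two_step {R : realType} {d : nat} (br : 'rV[R]_d -> 'rV[R]_d -> 'rV[R]_d) :=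
  forall u v w, br (br u v) w = 0.

Definition center {R : realType} {d : nat} (br : 'rV[R]_d -> 'rV[R]_d -> 'rV[R]_d)
  (z : 'rV[R]_d) : Prop := forall u, br z u = 0.

Definition vpart {R : realType} {d : nat} (br : 'rV[R]_d -> 'rV[R]_d -> 'rV[R]_d)
  (x : 'rV[R]_d) : Prop := forall z, center br z -> ip x z = 0.

Definition is_j {R : realType} {d : nat} (br : 'rV[R]_d -> 'rV[R]_d -> 'rV[R]_d)
  (j : 'rV[R]_d -> 'rV[R]_d -> 'rV[R]_d) : Prop :=
  forall Z V, center br Z -> vpart br V ->
    vpart br (j Z V) /\ (forall W, vpart br W -> ip (j Z V) W = ip Z (br V W)).

Definition invertible_on {R : realType} {d : nat} (P : 'rV[R]_d -> Prop)
  (f : 'rV[R]_d -> 'rV[R]_d) : Prop :=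
  (forall x, P x -> P (f x)) /\
  (forall x y, P x -> P y -> f x = f y -> x = y) /\
  (forall y, P y -> exists2 x, P x & f x = y).

Definition nonsingular {R : realType} {d : nat} (br : 'rV[R]_d -> 'rV[R]_d -> 'rV[R]_d)
  (j : 'rV[R]_d -> 'rV[R]_d -> 'rV[R]_d) : Prop :=
  forall Z, center br Z -> Z <> 0 -> invertible_on (vpart br) (j Z).

Definition almost_nonsingular {R : realType} {d : nat}
  (br : 'rV[R]_d -> 'rV[R]_d -> 'rV[R]_d) (j : 'rV[R]_d -> 'rV[R]_d -> 'rV[R]_d) : Prop :=
  (exists Z, center br Z /\ invertible_on (vpart br) (j Z)) /\
  (exists Z', center br Z' /\ ~ invertible_on (vpart br) (j Z')).

(* endomorphisms act on row vectors on the right: F(u) = u *m F *)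
Definition skew_sym {R : realType} {d : nat} (F : 'M[R]_d) : Prop :=
  forall u v, ip (u *m F) v = - ip u (v *m F).

Definition typeII {R : realType} {d : nat} (br : 'rV[R]_d -> 'rV[R]_d -> 'rV[R]_d)
  (F : 'M[R]_d) : Prop :=
  (forall V, vpart br V -> center br (V *m F)) /\
  (forall Z, center br Z -> vpart br (Z *m F)).

Definition omega {R : realType} {d : nat} (F : 'M[R]_d) (u v : 'rV[R]_d) : R :=
  ip (u *m F) v.

Definition closed_form {R : realType} {d : nat} (br : 'rV[R]_d -> 'rV[R]_d -> 'rV[R]_d)
  (F : 'M[R]_d) : Prop :=
  forall U V W, omega F (br U V) W + omega F (br V W) U + omega F (br W U) V = 0.

(* Koszul formula for left-invariant fields: koszul X Y Z = <nabla_X Y, Z> *)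
Definition koszul {R : realType} {d : nat} (br : 'rV[R]_d -> 'rV[R]_d -> 'rV[R]_d)
  (X Y Z : 'rV[R]_d) : R :=
  (ip (br X Y) Z - ip (br Y Z) X + ip (br Z X) Y) / 2%:R.

(* nabla F = 0 : <nabla_X (F Y), Z> = <F (nabla_X Y), Z> = <nabla_X Y, F^* Z>,
   where the adjoint F^* of u |-> u *m F is u |-> u *m F^T *)
Definition parallel {R : realType} {d : nat} (br : 'rV[R]_d -> 'rV[R]_d -> 'rV[R]_d)
  (F : 'M[R]_d) : Prop :=
  forall X Y Z, koszul br X (Y *m F) Z = koszul br X Y (Z *m F^T).

(* Main.v *)
Require Import Defs.
From mathcomp Require Import all_boot all_algebra.
From mathcomp Require Import reals.
From mathcomp Require Import zify.
Set Implicit Arguments. Unset Strict Implicit. Unset Printing Implicit Defensive.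
Import GRing.Theory Num.Theory.
Local Open Scope ring_scope.

Section Aux.
Variable R : realType.

Lemma ip_self0 n (x : 'rV[R]_n) : ip x x = 0 -> x = 0.
Proof.
rewrite /ip mxE => H.
have H' : \sum_(k < n) x 0 k * x 0 k = 0.
  by rewrite -[RHS]H; apply: eq_bigr => i _; rewrite mxE.
have H2 : forall k, x 0 k * x 0 k = 0.
  move=> k; apply: (psumr_eq0P _ H') => // i _.
  by rewrite -expr2 sqr_ge0.
apply/rowP => k; rewrite mxE; apply/eqP; have := H2 k; by move/eqP; rewrite mulf_eq0 orbb.
Qed.

Lemma ipDl n (u v w : 'rV[R]_n) : ip (u + v) w = ip u w + ip v w.
Proof. by rewrite /ip mulmxDl mxE. Qed.
Lemma ipNl n (u w : 'rV[R]_n) : ip (- u) w = - ip u w.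
Proof. by rewrite /ip mulNmx mxE. Qed.
Lemma ip0l n (w : 'rV[R]_n) : ip 0 w = 0.
Proof. by rewrite /ip mul0mx mxE. Qed.
Lemma ip0r n (w : 'rV[R]_n) : ip w 0 = 0.
Proof. by rewrite /ip trmx0 mulmx0 mxE. Qed.
Lemma ipC n (u v : 'rV[R]_n) : ip u v = ip v u.
Proof. by rewrite /ip -[u *m v^T]trmxK trmx_mul trmxK mxE. Qed.
Lemma ipFT n (u W : 'rV[R]_n) F : ip u (W *m F^T) = ip (u *m F) W.
Proof. by rewrite /ip trmx_mul trmxK mulmxA. Qed.

Lemma lin0 n p (g : 'rV[R]_n -> 'rV[R]_p) :
  (forall a u v, g (a *: u + v) = a *: g u + g v) -> g 0 = 0.
Proof.
move=> H; have := H (-1) 0 0; rewrite scaler0 addr0 scaleN1r.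
by move=> ->; rewrite addNr.
Qed.

Lemma lin_sum n p (g : 'rV[R]_n -> 'rV[R]_p) :
  (forall a u v, g (a *: u + v) = a *: g u + g v) ->
  forall u, g u = \sum_(i < n) u 0 i *: g (delta_mx 0 i).
Proof.
move=> H u; rewrite {1}(row_sum_delta u).
apply: (big_rec2 (fun x y => g x = y)); first exact: lin0.
by move=> i y1 y2 _ <-; rewrite H.
Qed.

Lemma mul_lin1 n p (g : 'rV[R]_n -> 'rV[R]_p) :
  (forall a u v, g (a *: u + v) = a *: g u + g v) ->
  forall u, u *m lin1_mx g = g u.
Proof.
move=> H u; apply/rowP => j; rewrite (lin_sum H u) !mxE summxE.
by apply: eq_bigr => i _; rewrite !mxE.
Qed.

Lemma rank_AAT n (A : 'M[R]_n) : \rank (A *m A^T) = \rank A.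
Proof.
have e1 : (kermx (A *m A^T) <= kermx A)%MS.
  rewrite sub_kermx; apply/eqP/row_matrixP => i; rewrite row0 row_mul.
  set r := row i (kermx (A *m A^T)).
  have h0 : r *m (A *m A^T) = 0.
    by rewrite /r -row_mul mulmx_ker row0.
  apply: ip_self0; rewrite /ip trmx_mul mulmxA -(mulmxA r) h0 mul0mx mxE.
  done.
have e2 : (kermx A <= kermx (A *m A^T))%MS.
  by rewrite sub_kermx mulmxA mulmx_ker mul0mx.
have : \rank (kermx (A *m A^T)) = \rank (kermx A).
  by apply/eqP; rewrite eqn_leq !mxrankS.
rewrite !mxrank_ker => h.
have l1 := rank_leq_row (A *m A^T); have l2 := rank_leq_row A.
lia.
Qed.

Lemma orth_decomp n (A : 'M[R]_n) (u : 'rV[R]_n) :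
  exists x : 'rV[R]_n, (u - x *m A) *m A^T = 0.
Proof.
have s1 : (A *m A^T <= A^T)%MS by apply: submxMl.
have s2 : (A^T <= A *m A^T)%MS.
  by rewrite -(mxrank_leqif_sup s1).2 rank_AAT mxrank_tr.
have : (u *m A^T <= A *m A^T)%MS by apply: submx_trans (submxMl _ _) s2.
case/submxP => x hx; exists x.
by rewrite mulmxBl hx mulmxA subrr.
Qed.

End Aux.

Lemma decomp (R : realType) (d : nat) (br : 'rV[R]_d -> 'rV[R]_d -> 'rV[R]_d) :
  is_lie_bracket br -> forall u, exists c, center br c /\ vpart br (u - c).
Proof.
move=> [hlin [hanti _]] u.
have hlin2 : forall z, forall a v w, br z (a *: v + w) = a *: br z v + br z w.
  by move=> z a v w; rewrite hanti hlin (hanti v) (hanti w) scalerN opprD !opprK.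
pose g (z : 'rV[R]_d) : 'rV[R]_(d * d) :=
  mxvec (\matrix_(k < d, l < d) br z (delta_mx 0 k) 0 l).
have glin : forall a v w, g (a *: v + w) = a *: g v + g w.
  move=> a v w; rewrite /g -linearP; congr mxvec.
  by apply/matrixP => k l; rewrite !mxE hlin !mxE.
pose M := lin1_mx g.
have cenE : forall z, center br z <-> z *m M = 0.
  move=> z; rewrite /M mul_lin1 //; split.
    move=> hz; apply/eqP; rewrite mxvec_eq0; apply/eqP/matrixP => k l.
    by rewrite !mxE hz mxE.
  move/eqP; rewrite mxvec_eq0 => /eqP h w.
  rewrite (lin_sum (hlin2 z) w); apply: big1 => k _.
  suff -> : br z (delta_mx 0 k) = 0 by rewrite scaler0.
  apply/rowP => l; move/matrixP: h => /(_ k l); rewrite !mxE => ->.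
  by rewrite ?mxE.
pose A := kermx M.
have [x hx] := orth_decomp A u.
exists (x *m A); split.
  by apply/cenE; rewrite -mulmxA mulmx_ker mulmx0.
move=> z /cenE /eqP; rewrite -sub_kermx => /submxP [y ->].
by rewrite /ip trmx_mul mulmxA hx mul0mx mxE.
Qed.

Theorem mainTheorem6 (R : realType) (d : nat)
  (br : 'rV[R]_d -> 'rV[R]_d -> 'rV[R]_d) (j : 'rV[R]_d -> 'rV[R]_d -> 'rV[R]_d)
  (F : 'M[R]_d) :
  is_lie_bracket br -> two_step br -> is_j br j ->
  (nonsingular br j \/ almost_nonsingular br j) ->
  skew_sym F -> typeII br F -> closed_form br F -> parallel br F ->
  F = 0.
Proof.
move=> hL h2 _ _ hskew [hTv hTz] _ hpar.
have hL' := hL; move: hL' => [hlin [hanti _]].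
have cenbr : forall u v, center br (br u v) by move=> u v w; exact: h2.
have brc : forall u z, center br z -> br u z = 0.
  by move=> u z hz; rewrite hanti hz oppr0.
have vz : forall x z, vpart br x -> center br z -> ip x z = 0.
  by move=> x z hx hz; exact: hx.
have zv : forall x z, vpart br x -> center br z -> ip z x = 0.
  by move=> x z hx hz; rewrite ipC; exact: hx.
have k2 : forall x y : R, x / 2%:R = y / 2%:R -> x = y.
  by move=> x y /(congr1 (fun t => t * 2%:R)); rewrite !divfK // pnatr_eq0.
have hB : forall Y Z W, vpart br Y -> center br Z ->
    ip (br Y (W *m F^T)) Z = 0.
  move=> Y Z W hY hZ; have := hpar Z Y W; rewrite /koszul.
  rewrite !hZ (hTv _ hY) !(brc _ _ hZ) !ip0l => /k2.
  rewrite !(addr0, add0r, subr0, sub0r, oppr0) => /eqP; rewrite eq_sym oppr_eq0 => /eqP.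
  done.
have hC : forall X Z, vpart br X -> center br Z -> br X (Z *m F) = 0.
  move=> X Z hX hZ; have hP := hTz _ hZ.
  have := hpar X Z (br X (Z *m F)); rewrite /koszul.
  rewrite (brc _ _ hZ) hZ (hanti (_ *m F^T)) ipNl hB // !ip0l.
  rewrite (zv _ _ hX (cenbr _ _)) (zv _ _ hP (cenbr _ _)).
  move=> /k2; rewrite !(addr0, add0r, subr0, sub0r, oppr0).
  by move/ip_self0.
have hD : forall Z, center br Z -> Z *m F = 0.
  move=> Z hZ; have hP := hTz _ hZ.
  have cP : center br (Z *m F).
    move=> w; have [c [hc hx]] := decomp hL w.
    have -> : w = 1 *: c + (w - c) by rewrite scale1r addrC subrK.
    by rewrite hanti hlin hc hC // scaler0 add0r oppr0.
  by apply: ip_self0; apply: vz.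
have hE : forall u : 'rV[R]_d, vpart br (u *m F).
  by move=> u z hz; rewrite hskew hD // ip0r oppr0.
have hF : forall u : 'rV[R]_d, u *m F *m F = 0.
  move=> u; apply: (@ip_self0 R d); apply: vz; [exact: (hE (u *m F)) | exact: (hTv _ (hE u))].
apply/matrixP => i k; rewrite mxE.
have : (delta_mx 0 i : 'rV[R]_d) *m F = 0.
  apply: ip_self0; rewrite hskew hF ip0r oppr0 //.
rewrite -rowE => /rowP /(_ k); rewrite !mxE => ->.
done.
Qed.
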